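(* Let $\mathcal{N}^+$ be a topological level-1 rooted network on $X$ with root $r$, and let $m=\mathrm{MRCA}(X)$. Then there is $k\ge 0$ and distinct nodes $r=r_1,h_1,r_2,h_2,\dots,r_k,h_k,r_{k+1}=m$ such that the nodes above $m$ are exactly $r_1,h_1,\dots,r_k,h_k$ and the edges above $m$ are exactly, for each $i=1,\dots,k$, two parallel edges from $r_i$ to $h_i$ (so $h_i$ is a hybrid node and the pair forms a $2$-cycle) together with one edge from $h_i$ to $r_{i+1}$. In particular, if $k=0$ then $m=r$.
   Context: Rooted network on $X$: connected directed acyclic graph without loops (at most two parallel edges between two nodes allowed) with a root $r$ (indegree 0, outdegree 2), leaves bijectively labeled by $X$ (indegree 1, outdegree 0), tree nodes (indegree 1, outdegree 2) and hybrid nodes (indegree 2, outdegree 1). A node $v$ is above $u$ if there is a nonempty directed path from $v$ to $u$; an edge with child $y$ is above a node $v$ if $y$ is above or equal to $v$. $\mathrm{MRCA}(X)$ is the lowest node among those lying on every directed path from $r$ to any leaf. A cycle is a cycle of the underlying undirected graph (a $2$-cycle being a pair of parallel edges); the network is level-1 if no two cycles share an edge. *)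

(* Defs.v *)
From mathcomp Require Import all_boot.
Set Implicit Arguments. Unset Strict Implicit. Unset Printing Implicit Defensive.

(* A directed multigraph: finite node type V, finite edge type E,
   each edge e goes from [src e] to [tgt e] (parallel edges allowed). *)
Section Network.
Variables (X V E : finType) (src tgt : E -> V).

Definition indeg (v : V) : nat := #|[set e | tgt e == v]|.
Definition outdeg (v : V) : nat := #|[set e | src e == v]|.

Fixpoint dwalk (v : V) (p : seq E) (u : V) : bool :=
  if p is e :: p' then (src e == v) && dwalk (tgt e) p' u else v == u.

Definition joins (e : E) (a b : V) : bool :=
  ((src e == a) && (tgt e == b)) || ((src e == b) && (tgt e == a)).

Fixpoint uwalk (v : V) (p : seq E) (u : V) : bool :=
  if p is e :: p' then
    ((src e == v) && uwalk (tgt e) p' u) || ((tgt e == v) && uwalk (src e) p' u)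
  else v == u.

Definition above (v u : V) : Prop := exists p, p != [::] /\ dwalk v p u.

Definition edge_above (e : E) (v : V) : Prop := tgt e = v \/ above (tgt e) v.

Definition is_leaf (v : V) : Prop := indeg v = 1 /\ outdeg v = 0.
Definition is_tree_node (v : V) : Prop := indeg v = 1 /\ outdeg v = 2.
Definition is_hybrid (v : V) : Prop := indeg v = 2 /\ outdeg v = 1.

Definition rooted_network (r : V) (lab : X -> V) : Prop :=
  [/\ (forall a b : V, exists p, uwalk a p b),
      (forall v p, p != [::] -> ~~ dwalk v p v),
      (forall e, src e != tgt e),
      (forall a b : V, #|[set e | (src e == a) && (tgt e == b)]| <= 2)
    & [/\
      (indeg r = 0 /\ outdeg r = 2),
      (forall v, v != r -> [\/ is_leaf v, is_tree_node v | is_hybrid v])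
    & (injective lab /\ forall v, is_leaf v <-> exists x, lab x = v)]].

(* A cycle of the underlying undirected multigraph, given as a nonempty
   cyclic list of (edge e_i, node v_i) where e_i joins v_i and v_{i+1}
   (indices mod length); edges pairwise distinct and nodes pairwise distinct.
   A 2-cycle is a pair of parallel edges. *)
Definition cyc_rel (a b : E * V) : bool := joins a.1 a.2 b.2.
Definition is_cycle (s : seq (E * V)) : bool :=
  [&& s != [::], uniq (map fst s), uniq (map snd s) & cycle cyc_rel s].

Definition level1 : Prop :=
  forall s1 s2, is_cycle s1 -> is_cycle s2 ->
    has (mem (map fst s2)) (map fst s1) -> map fst s1 =i map fst s2.

Definition on_all_root_leaf_paths (r : V) (lab : X -> V) (w : V) : Prop :=
  forall x p, dwalk r p (lab x) -> w \in r :: map tgt p.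

Definition is_MRCA (r : V) (lab : X -> V) (m : V) : Prop :=
  on_all_root_leaf_paths r lab m /\
  forall w, on_all_root_leaf_paths r lab w -> w = m \/ above w m.

End Network.

(* Main.v *)
Require Import Defs.
From mathcomp Require Import all_boot.
From Stdlib Require Import ClassicalEpsilon.
Set Implicit Arguments. Unset Strict Implicit. Unset Printing Implicit Defensive.

Section Net.
Variables (X V E : finType) (src tgt : E -> V).

Local Notation dwalk := (dwalk src tgt).
Local Notation above := (above src tgt).
Definition reach (v u : V) : Prop := v = u \/ above v u.

Lemma dwalk_catI v p u q w : dwalk v p u -> dwalk u q w -> dwalk v (p ++ q) w.
Proof.
elim: p v => [|e p IH] v /=; first by move=> /eqP ->.
by case/andP=> -> H1 H2; rewrite (IH _ H1 H2).
Qed.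

Lemma dwalk_catE v p q w : dwalk v (p ++ q) w -> exists u, dwalk v p u /\ dwalk u q w.
Proof.
elim: p v => [|e p IH] v /=; first by move=> H; exists v; rewrite eqxx.
case/andP=> /eqP -> /IH [u [H1 H2]]; exists u; by rewrite eqxx H1.
Qed.

Lemma above_trans a b c : above a b -> above b c -> above a c.
Proof.
move=> [p [Hp H1]] [q [Hq H2]]; exists (p ++ q); split; last exact: dwalk_catI H1 H2.
by case: p Hp {H1}.
Qed.

Lemma reach_trans a b c : reach a b -> reach b c -> reach a c.
Proof.
case=> [->//|H1] [<-|H2]; first by right.
by right; apply: above_trans H1 H2.
Qed.

Lemma reach_above a b c : reach a b -> above b c -> above a c.
Proof. by case=> [->//|H1] H2; apply: above_trans H1 H2. Qed.

Lemma above_reach a b c : above a b -> reach b c -> above a c.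
Proof. by move=> H1 [<-//|H2]; apply: above_trans H1 H2. Qed.

Lemma above_edge e u : reach (tgt e) u -> above (src e) u.
Proof.
case=> [<-|[p [_ Hp]]]; first by exists [:: e]; rewrite /= !eqxx.
by exists (e :: p); rewrite /= eqxx Hp.
Qed.

Lemma above_first v u : above v u -> exists2 e, src e = v & reach (tgt e) u.
Proof.
case=> [[|e p]] [//= _] /andP [/eqP He Hp]; exists e => //.
case: p Hp => [/eqP ->|g p Hp]; [by left | by right; exists (g :: p)].
Qed.

Lemma walk_reach v p z : dwalk v p z -> reach v z.
Proof. case: p => [/eqP ->|e p H]; [by left | by right; exists (e :: p)]. Qed.

Lemma walk_mem v p z y : dwalk v p z -> y \in v :: map tgt p -> reach v y /\ reach y z.
Proof.
elim: p v => [|e p IH] v /=.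
  by move=> /eqP -> ; rewrite inE => /eqP ->; split; left.
case/andP=> /eqP He Hp; rewrite inE => /orP [/eqP ->|Hy].
  split; [by left|]; right; rewrite -He; apply: above_edge; exact: walk_reach Hp.
have [H1 H2] := IH _ Hp Hy; split=> //; right; rewrite -He; exact: above_edge.
Qed.

Hypothesis Hacyc : forall v p, p != [::] -> ~~ dwalk v p v.

Lemma acyc v : ~ above v v.
Proof. by move=> [p [Hp Hw]]; move: (Hacyc v Hp); rewrite Hw. Qed.

Lemma src_mem v p z g : dwalk v p z -> g \in p -> src g \in v :: map tgt p.
Proof.
elim: p v => [|e p IH] v //= /andP [/eqP He Hp]; rewrite inE => /orP [/eqP ->|Hg].
  by rewrite He mem_head.
by rewrite inE (IH _ Hp Hg) orbT.
Qed.

Lemma edge_in_walk v p z g : dwalk v p z -> g \in p -> reach v (src g) /\ reach (tgt g) z.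
Proof.
move=> Hw Hg; split; first exact: (walk_mem Hw (src_mem Hw Hg)).1.
apply: (walk_mem Hw _).2; by rewrite inE map_f ?orbT.
Qed.

Lemma uniq_src v p z : dwalk v p z -> uniq (map src p).
Proof.
elim: p v => [|e p IH] v //= /andP [/eqP He Hp]; rewrite (IH _ Hp) andbT.
apply/mapP => [[g Hg Hs]]; have [H1 _] := edge_in_walk Hp Hg.
apply: (@acyc (src e)); rewrite {2}Hs; exact: above_edge.
Qed.

Lemma uniq_tgt v p z : dwalk v p z -> uniq (map tgt p).
Proof.
elim: p v => [|e p IH] v //= /andP [/eqP He Hp]; rewrite (IH _ Hp) andbT.
apply/mapP => [[g Hg Hs]]; have [H1 _] := edge_in_walk Hp Hg.
apply: (@acyc (tgt e)); apply: (reach_above H1); rewrite Hs; apply: above_edge; by left.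
Qed.

Definition aboveb v u : bool := if excluded_middle_informative (above v u) then true else false.
Lemma aboveP v u : reflect (above v u) (aboveb v u).
Proof. by rewrite /aboveb; case: excluded_middle_informative => H; constructor. Qed.

Lemma up_ind (P : V -> Prop) : (forall v, (forall w, above w v -> P w) -> P v) -> forall v, P v.
Proof.
move=> H.
suff: forall n v, #|[set w | aboveb w v]| < n -> P v by move=> S v; apply: (S _ v (ltnSn _)).
elim=> [//|n IH] v Hv; rewrite ltnS in Hv; apply: H => w Hw; apply: IH; apply: leq_trans Hv.
apply: proper_card; apply/properP; split.
  apply/subsetP => z; rewrite !inE => /aboveP Hz; apply/aboveP; exact: above_trans Hz Hw.
by exists w; rewrite !inE; [apply/aboveP | apply/aboveP; apply: acyc].
Qed.

Lemma down_ind (P : V -> Prop) : (forall v, (forall w, above v w -> P w) -> P v) -> forall v, P v.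
Proof.
move=> H.
suff: forall n v, #|[set w | aboveb v w]| < n -> P v by move=> S v; apply: (S _ v (ltnSn _)).
elim=> [//|n IH] v Hv; rewrite ltnS in Hv; apply: H => w Hw; apply: IH; apply: leq_trans Hv.
apply: proper_card; apply/properP; split.
  apply/subsetP => z; rewrite !inE => /aboveP Hz; apply/aboveP; exact: above_trans Hw Hz.
by exists w; rewrite !inE; [apply/aboveP | apply/aboveP; apply: acyc].
Qed.

Lemma max_elt (P : V -> Prop) v : P v -> exists x, P x /\ forall y, P y -> ~ above y x.
Proof.
move: v; apply: up_ind => v IH Pv.
case: (excluded_middle_informative (exists y, P y /\ above y v)) => [[y [Py Hy]]|N].
  exact: IH Hy Py.
by exists v; split=> // y Py Hy; apply: N; exists y.
Qed.

Local Notation joins := (joins src tgt).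
Local Notation cyc_rel := (cyc_rel src tgt).
Definition fw (p : seq E) := [seq (h, src h) | h <- p].
Definition bw (p : seq E) := [seq (h, tgt h) | h <- rev p].

Lemma fw_path v p z x0 : dwalk v p z -> joins x0.1 x0.2 v ->
  path cyc_rel x0 (fw p) /\ joins (last x0 (fw p)).1 (last x0 (fw p)).2 z.
Proof.
elim: p v x0 => [|e p IH] v x0 /=; first by move=> /eqP ->.
case/andP=> /eqP He Hp Hj; rewrite /cyc_rel /= He Hj /=.
apply: IH Hp _; by rewrite /joins /= He !eqxx.
Qed.

Lemma bw_path v p z x0 : dwalk v p z -> joins x0.1 x0.2 z ->
  path cyc_rel x0 (bw p) /\ joins (last x0 (bw p)).1 (last x0 (bw p)).2 v.
Proof.
elim: p v x0 => [|e p IH] v x0 /=; first by move=> /eqP ->.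
case/andP=> /eqP He Hp Hj; rewrite /bw rev_cons map_rcons rcons_path last_rcons.
have [H1 H2] := IH _ _ Hp Hj; rewrite -/(bw p) H1 /=; split.
  exact: H2.
by rewrite /joins /= He !eqxx orbT.
Qed.

Lemma side_src s e w x g : src e = s -> dwalk (tgt e) w x -> g \in e :: w ->
  g = e \/ (src g \in tgt e :: map tgt w /\ above s (src g)).
Proof.
move=> He Hw; rewrite inE => /orP [/eqP ->|Hg]; [by left | right].
split; first exact: src_mem Hw Hg.
rewrite -He; apply: above_edge; exact: (edge_in_walk Hw Hg).1.
Qed.

Lemma gadget s e e' x w w' : e != e' -> src e = s -> src e' = s ->
  dwalk (tgt e) w x -> dwalk (tgt e') w' x ->
  (forall y, y \in tgt e :: map tgt w -> y \in tgt e' :: map tgt w' -> y = x) ->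
  is_cycle src tgt (fw (e :: w) ++ bw (e' :: w')).
Proof.
move=> Hne He He' Hw Hw' Hd.
have HP : dwalk s (e :: w) x by rewrite /= He eqxx.
have HQ : dwalk s (e' :: w') x by rewrite /= He' eqxx.
have Hfst : forall p, map fst (fw p) = p by move=> p; rewrite -map_comp map_id.
have Hfst' : forall p, map fst (bw p) = rev p by move=> p; rewrite /bw -map_comp map_id.
have Hsnd : forall p, map snd (fw p) = map src p by move=> p; rewrite -map_comp.
have Hsnd' : forall p, map snd (bw p) = rev (map tgt p) by move=> p; rewrite /bw -map_comp map_rev.
rewrite /is_cycle map_cat Hfst Hfst' map_cat Hsnd Hsnd' !cat_uniq !rev_uniq.
rewrite (map_uniq (uniq_src HP)) (map_uniq (uniq_src HQ)) (uniq_src HP) (uniq_tgt HQ) /=.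
rewrite !andbT; apply/and3P; split.
- apply/negP => /hasP [g]; rewrite mem_rev => Hg2 Hg1.
  have [E1|[A1 B1]] := side_src He Hw Hg1; have [E2|[A2 B2]] := side_src He' Hw' Hg2.
  + by move: Hne; rewrite -E1 E2 eqxx.
  + by apply: (@acyc s); move: B2; rewrite E1 He.
  + by apply: (@acyc s); move: B1; rewrite E2 He'.
  + have Hx := Hd _ A1 A2; apply: (@acyc x); rewrite -{1}Hx; apply: above_edge.
    exact: (edge_in_walk HP Hg1).2.
- apply/negP => /hasP [y]; rewrite mem_rev => Hy2 Hy1.
  have /mapP [g' Hg' Ey] : y \in map tgt (e' :: w') by [].
  have /mapP [g Hg Hy] : y \in map src (e :: w) by [].
  rewrite Ey in Hy; clear Ey Hy1 Hy2.
  have Ha : above s (tgt g').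
    apply: (reach_above (edge_in_walk HQ Hg').1); apply: above_edge; by left.
  have [E1|[A1 B1]] := side_src He Hw Hg.
  + by apply: (@acyc s); move: Ha; rewrite Hy E1 He.
  + have A2 : tgt g' \in tgt e' :: map tgt w'.
      move: Hg'; rewrite inE => /orP [/eqP ->|H]; first exact: mem_head.
      by rewrite inE map_f ?orbT.
    have Hx := Hd _ A1 (etrans (congr1 (fun z => z \in _) (esym Hy)) A2).
    apply: (@acyc x); rewrite -{1}Hx; apply: above_edge.
    exact: (edge_in_walk HP Hg).2.
- rewrite rcons_path cat_path last_cat.
  have J0 : joins (e, src e).1 (e, src e).2 (tgt e) by rewrite /joins /= !eqxx.
  have [P1 J1] := fw_path Hw J0.
  have [P2 J2] := bw_path HQ J1.
  by rewrite P1 P2 /cyc_rel /=; move: J2; rewrite He.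
Qed.

Lemma fst_cyc p q : map fst (fw p ++ bw q) = p ++ rev q.
Proof. by rewrite map_cat /fw /bw -!map_comp !map_id. Qed.

Lemma reach_walk v u : reach v u -> exists p, dwalk v p u.
Proof. by case=> [->|[p [_ H]]]; [exists [::]; rewrite /= eqxx | exists p]. Qed.

Lemma walk_pos v p z y : dwalk v p z -> y \in v :: map tgt p ->
  y = z \/ exists2 g, g \in p & src g = y.
Proof.
elim: p v => [|e p IH] v /=; first by move=> /eqP -> ; rewrite inE => /eqP ->; left.
case/andP=> /eqP He Hp; rewrite inE => /orP [/eqP ->|Hy].
  by right; exists e; rewrite ?mem_head.
have [->|[g Hg Hs]] := IH _ Hp Hy; [by left | right; exists g => //].
by rewrite inE Hg orbT.
Qed.

Lemma card2_set (P : pred E) : #|[set e | P e]| = 2 ->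
  exists e1 e2, [/\ e1 != e2, P e1, P e2 & forall e, P e -> e = e1 \/ e = e2].
Proof.
move/eqP/cards2P => [e1 [e2 [Hne Hs]]]; exists e1, e2; split=> //.
- have : e1 \in [set e | P e] by rewrite Hs !inE eqxx.
  by rewrite inE.
- have : e2 \in [set e | P e] by rewrite Hs !inE eqxx orbT.
  by rewrite inE.
- move=> e Pe; have : e \in [set e | P e] by rewrite inE.
  by rewrite Hs !inE => /orP [/eqP ->|/eqP ->]; [left|right].
Qed.

Lemma card1_set (P : pred E) : #|[set e | P e]| = 1 ->
  exists g, P g /\ forall e, P e -> e = g.
Proof.
move/eqP/cards1P => [g Hs]; exists g; split.
  have : g \in [set e | P e] by rewrite Hs !inE eqxx.
  by rewrite inE.
move=> e Pe; have : e \in [set e | P e] by rewrite inE.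
by rewrite Hs !inE => /eqP.
Qed.

Lemma card0_set (P : pred E) e : #|[set e | P e]| = 0 -> ~~ P e.
Proof. by move/card0_eq/(_ e); rewrite inE => ->. Qed.

Lemma cardpos_set (P : pred E) : 0 < #|[set e | P e]| -> exists e, P e.
Proof. by rewrite card_gt0 => /set0Pn [e]; rewrite inE; exists e. Qed.

Variables (r : V) (lab : X -> V) (m : V).
Hypothesis Hroot : indeg tgt r = 0 /\ outdeg src r = 2.
Hypothesis Hnodes : forall v, v != r ->
  [\/ is_leaf src tgt v, is_tree_node src tgt v | is_hybrid src tgt v].
Hypothesis Hleaf : forall v, is_leaf src tgt v <-> exists x, lab x = v.
Hypothesis Hlvl : level1 src tgt.
Hypothesis HM : is_MRCA src tgt r lab m.

Local Notation dom := (on_all_root_leaf_paths src tgt r lab).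

Lemma tgt_not_r e : tgt e != r.
Proof.
apply/eqP => He; have := card0_set e (proj1 Hroot); by rewrite He eqxx.
Qed.

Lemma leaf_noout x e : src e != lab x.
Proof.
have [_ H0] := (Hleaf (lab x)).2 (ex_intro _ x erefl).
exact: (card0_set e H0).
Qed.

Lemma root_reach v : exists p, dwalk r p v.
Proof.
move: v; apply: up_ind => v IH.
case: (eqVneq v r) => [->|Hv]; first by exists [::]; rewrite /= eqxx.
have : 0 < indeg tgt v.
  by case: (Hnodes Hv) => [[->]|[->]|[->]].
case/cardpos_set => e /eqP He.
have [p Hp] := IH (src e) (above_edge (or_introl He)).
exists (p ++ [:: e]); apply: dwalk_catI Hp _; by rewrite /= He !eqxx.
Qed.

Lemma reach_leaf v : exists x p, dwalk v p (lab x).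
Proof.
move: v; apply: down_ind => v IH.
case: (posnP (outdeg src v)) => Hv.
  have Hvr : v != r by apply/eqP => Ev; move: Hv; rewrite Ev (proj2 Hroot).
  case: (Hnodes Hvr) => [HL|[_ H]|[_ H]]; last 2 first.
  - by rewrite H in Hv. - by rewrite H in Hv.
  have [x Hx] := (Hleaf v).1 HL; exists x, [::]; by rewrite /= Hx eqxx.
case/cardpos_set: Hv => e /eqP He.
have [x [p Hp]] := IH (tgt e) (eq_ind _ (fun z => above z (tgt e)) (above_edge (or_introl (erefl (tgt e)))) _ He).
by exists x, (e :: p); rewrite /= He eqxx.
Qed.

Lemma LM e : above (src e) m -> reach (tgt e) m.
Proof.
move=> Ha; have [Wr Hr] := root_reach (src e); have [x [Wa Hw]] := reach_leaf (tgt e).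
have Hf : dwalk r (Wr ++ e :: Wa) (lab x) by apply: dwalk_catI Hr _; rewrite /= eqxx.
have := (proj1 HM) x _ Hf; rewrite map_cat -cat_cons mem_cat => /orP [H|H].
  by have [_ H2] := walk_mem Hr H; case: (acyc (reach_above H2 Ha)).
exact: (walk_mem Hw H).1.
Qed.

Lemma dom_next u h : dom u -> (exists e, src e = u) -> (forall e, src e = u -> tgt e = h) -> dom h.
Proof.
move=> Hu [e0 He0] Hh x p Hp; have [Ev|[g Hg Hs]] := walk_pos Hp (Hu x p Hp).
  by move: (leaf_noout x e0); rewrite He0 Ev eqxx.
by rewrite inE -(Hh g Hs) map_f ?orbT.
Qed.

Lemma above_neq v u : reach v u -> v != u -> above v u.
Proof. by case=> [->|//]; rewrite eqxx. Qed.

Lemma edge_above' e : above (src e) (tgt e).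
Proof. apply: above_edge; by left. Qed.

Lemma maxdisj a b x : (forall y, reach a y -> reach b y -> ~ above y x) ->
  forall p q, dwalk a p x -> dwalk b q x ->
  forall y, y \in a :: map tgt p -> y \in b :: map tgt q -> y = x.
Proof.
move=> Hmax p q Hp Hq y Hy1 Hy2; have [A1 A2] := walk_mem Hp Hy1.
have [B1 _] := walk_mem Hq Hy2; case: (eqVneq y x) => // Hne.
by case: (Hmax y A1 B1 (above_neq A2 Hne)).
Qed.

Lemma sub_contra u e1 e2 x : dom u -> above u m -> e1 != e2 -> src e1 = u -> src e2 = u ->
  (forall e, src e = u -> e = e1 \/ e = e2) -> tgt e1 != tgt e2 ->
  reach (tgt e1) x -> reach (tgt e2) x ->
  (forall y, reach (tgt e1) y -> reach (tgt e2) y -> ~ above y x) -> tgt e1 != x -> False.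
Proof.
move=> Hdu Hum Hne H1 H2 Hout Hab Hax Hbx Hmax Hax'.
set a := tgt e1 in Hab Hax Hmax Hax'; set b := tgt e2 in Hab Hbx Hmax.
have Hma : reach a m by apply: LM; rewrite H1.
have Hmb : reach b m by apply: LM; rewrite H2.
have Hax2 := above_neq Hax Hax'.
have [[|s1 P1] [//= _ /andP [/eqP Hs1 HP1]]] := Hax2.
have [P2 HP2] := reach_walk Hbx.
have Ham : above a m.
  apply: above_neq Hma _; apply/eqP => Eam; apply: (Hmax a (or_introl erefl)) => //.
  by rewrite Eam.
have Hua : above u a by rewrite -H1; apply: edge_above'.
have Har : a != r by apply: tgt_not_r.
have Hout2 : outdeg src a = 2.
  case: (Hnodes Har) => [[_ H0]|[_ ->]//|[Hin _]].
    by move: (card0_set s1 H0); rewrite Hs1 eqxx.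
  have [g1 [g2 [Hg12 /eqP Hg1 /eqP Hg2 Hall]]] := card2_set Hin.
  have [g [Hge Hg]] : exists g, g != e1 /\ tgt g = a.
    case: (eqVneq g1 e1) => [Ee|Ne]; last by exists g1.
    by exists g2; split=> //; rewrite -Ee eq_sym.
  have [Wq Hq] := root_reach (src g); have [x0 [Wa Hw]] := reach_leaf a.
  have Hf : dwalk r (Wq ++ g :: Wa) (lab x0) by apply: dwalk_catI Hq _; rewrite /= Hg !eqxx.
  have := Hdu x0 _ Hf; rewrite map_cat /= -cat_cons mem_cat Hg => /orP [H|H]; last first.
    by have [H3 _] := walk_mem Hw H; case: (acyc (reach_above H3 Hua)).
  have [_ Huq] := walk_mem Hq H.
  have Hqa : above (src g) a by rewrite -Hg; apply: edge_above'.
  case: Huq => [Euq|Huq].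
    by case: (Hout g (esym Euq)) => Eg; [move: Hge; rewrite Eg eqxx | move: Hab; rewrite /a /b -Eg Hg eqxx].
  have [e He Hr] := above_first Huq.
  case: (Hout e He) => Ee; rewrite Ee in Hr.
    by case: (acyc (reach_above Hr Hqa)).
  by case: (Hmax a (or_introl erefl) (or_intror (reach_above Hr Hqa))).
have [f1 [f2 [Hf12 /eqP Hf1 /eqP Hf2 Hfall]]] := card2_set Hout2.
have [f [Hfs Hf]] : exists f, f != s1 /\ src f = a.
  case: (Hfall s1 (introT eqP Hs1)) => Es; [exists f2 | exists f1]; split=> //.
    by rewrite Es eq_sym.
  by rewrite Es.
have Hm1 : reach (tgt s1) m by apply: LM; rewrite Hs1.
have Hm2 : reach (tgt f) m by apply: LM; rewrite Hf.
have [x2 [[R1 R2] Hmax2]] := max_elt (P := fun y => reach (tgt s1) y /\ reach (tgt f) y) (conj Hm1 Hm2).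
have [W1 HW1] := reach_walk R1; have [W2 HW2] := reach_walk R2.
have HP1' : dwalk a (s1 :: P1) x by rewrite /= Hs1 eqxx.
have C1 := gadget Hne H1 H2 HP1' HP2 (maxdisj Hmax HP1' HP2).
have C2 := gadget (Hfs : f != s1) Hf Hs1 HW2 HW1 (maxdisj (fun y A B => Hmax2 y (conj B A)) HW2 HW1).
have Hsh : has (mem (map fst (fw (f :: W2) ++ bw (s1 :: W1)))) (map fst (fw (e1 :: s1 :: P1) ++ bw (e2 :: P2))).
  apply/hasP; exists s1; first by rewrite fst_cyc mem_cat inE mem_head orbT.
  by rewrite inE fst_cyc mem_cat mem_rev mem_head orbT.
have Heq := Hlvl C1 C2 Hsh.
have : f \in map fst (fw (e1 :: s1 :: P1) ++ bw (e2 :: P2)).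
  by rewrite Heq fst_cyc mem_cat mem_head.
have Haa : above a (tgt s1) by rewrite -Hs1; apply: edge_above'.
rewrite fst_cyc mem_cat mem_rev !inE => /orP [/orP [/eqP Ef|/orP [/eqP Ef|Hf1']]|/orP [/eqP Ef|Hf2']].
- by move: Hf; rewrite Ef H1 => Eua; apply: (@acyc a); rewrite -{1}Eua.
- by move: Hfs; rewrite Ef eqxx.
- have [Hr _] := edge_in_walk HP1 Hf1'; rewrite Hf in Hr.
  by case: (acyc (above_reach Haa Hr)).
- by move: Hf; rewrite Ef H2 => Eua; apply: (@acyc a); rewrite -{1}Eua.
- have [Hr _] := edge_in_walk HP2 Hf2'; rewrite Hf in Hr.
  exact: (Hmax a (or_introl erefl) Hr Hax2).
Qed.

Lemma step u : dom u -> u != m -> reach u m -> outdeg src u = 2 ->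
  exists h u', [/\ (forall e, src e = u -> tgt e = h),
     (forall e, src e = h -> tgt e = u'), outdeg src h = 1, dom u' & reach u' m]
     /\ (u' != m -> outdeg src u' = 2).
Proof.
move=> Hdu Hne Hum Hout; have Ha := above_neq Hum Hne.
have [e1 [e2 [H12 /eqP H1 /eqP H2 Hall']]] := card2_set Hout.
have Hall : forall e, src e = u -> e = e1 \/ e = e2 by move=> e /eqP; apply: Hall'.
have Hab : tgt e1 = tgt e2.
  apply/eqP; apply/negPn/negP => Hab.
  have Hma : reach (tgt e1) m by apply: LM; rewrite H1.
  have Hmb : reach (tgt e2) m by apply: LM; rewrite H2.
  have [x [[Rx1 Rx2] Hmax]] := max_elt (P := fun y => reach (tgt e1) y /\ reach (tgt e2) y) (conj Hma Hmb).
  case: (eqVneq (tgt e1) x) => Hax.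
    have Hbx : tgt e2 != x by rewrite -Hax eq_sym.
    apply: (sub_contra Hdu Ha _ H2 H1 _ _ Rx2 Rx1 _ Hbx).
    - by rewrite eq_sym.
    - by move=> e /Hall [->|->]; [right|left].
    - by rewrite eq_sym.
    - by move=> y A B; apply: Hmax.
  apply: (sub_contra Hdu Ha H12 H1 H2 Hall Hab Rx1 Rx2 _ Hax).
  by move=> y A B; apply: Hmax.
set h := tgt e1.
have Hh : forall e, src e = u -> tgt e = h by move=> e /Hall [->|->].
have Hhr : h != r by apply: tgt_not_r.
have Hin : 1 < indeg tgt h.
  have : #|[set e1; e2]| <= indeg tgt h.
    apply: subset_leq_card; apply/subsetP => e.
    by rewrite !inE => /orP [/eqP ->|/eqP ->]; rewrite /h -?Hab eqxx.
  by rewrite cards2 H12.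
have Hout1 : outdeg src h = 1.
  by case: (Hnodes Hhr) => [[H _]|[H _]|[_ H]] //; rewrite H in Hin.
have [g [/eqP Hg Hgu]] := card1_set Hout1.
have Hgall : forall e, src e = h -> e = g by move=> e /eqP; apply: Hgu.
set u' := tgt g.
have Hh' : forall e, src e = h -> tgt e = u' by move=> e /Hgall ->.
have Hdh : dom h by apply: (dom_next Hdu _ Hh); exists e1.
have Hdu' : dom u' by apply: (dom_next Hdh _ Hh'); exists g.
have Hhu' : above h u' by rewrite -Hg; apply: edge_above'.
have Hu'm : reach u' m.
  case: (proj2 HM h Hdh) => [Ehm|Hhm].
    case: (proj2 HM u' Hdu') => [Eum|Hum'].
      by move: Hhu'; rewrite Ehm Eum => /acyc.
    by move: Hum'; rewrite -Ehm => /(above_trans Hhu') /acyc.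
  by have [e He Hr] := above_first Hhm; rewrite -(Hh' e He).
exists h, u'; split=> // Hne'.
have Hu'r : u' != r by apply: tgt_not_r.
have Hum' := above_neq Hu'm Hne'.
case: (Hnodes Hu'r) => [[_ H0]|[_ ->]//|[Hin' _]].
  have [e He _] := above_first Hum'; by move: (card0_set e H0); rewrite He eqxx.
have [g1 [g2 [Hg12 /eqP Hg1 /eqP Hg2 _]]] := card2_set Hin'.
have [g' [Hge Hg']] : exists g', g' != g /\ tgt g' = u'.
  case: (eqVneq g1 g) => [Ee|Ne]; last by exists g1.
  by exists g2; split=> //; rewrite -Ee eq_sym.
have Hsh : src g' != h by apply/eqP => /Hgall Eg; move: Hge; rewrite Eg eqxx.
have [Wq Hq] := root_reach (src g'); have [x0 [Wa Hw]] := reach_leaf u'.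
have Hf : dwalk r (Wq ++ g' :: Wa) (lab x0) by apply: dwalk_catI Hq _; rewrite /= Hg' !eqxx.
have := Hdh x0 _ Hf; rewrite map_cat /= -cat_cons mem_cat Hg' => /orP [H|H]; last first.
  by have [H3 _] := walk_mem Hw H; case: (acyc (reach_above H3 Hhu')).
have [_ Hhq] := walk_mem Hq H.
have Hq' := above_neq Hhq ltac:(by rewrite eq_sym).
have [e He Hr] := above_first Hq'; rewrite (Hh' e He) in Hr.
have Hqa : above (src g') u' by rewrite -Hg'; apply: edge_above'.
by case: (acyc (reach_above Hr Hqa)).
Qed.

Lemma map_iotaS (f : nat -> V) n s : [seq f i | i <- iota s.+1 n] = [seq f i.+1 | i <- iota s n].
Proof. by elim: n s => //= n IH s; rewrite IH. Qed.

Definition chainP u k (rr hh : nat -> V) :=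
  [/\ rr 0 = u, rr k = m,
    uniq ([seq rr i | i <- iota 0 k.+1] ++ [seq hh i | i <- iota 0 k])
  & [/\ (forall v, reach u v /\ above v m <-> exists2 i, i < k & (v = rr i \/ v = hh i)),
    (forall e, reach u (src e) /\ reach (tgt e) m <-> exists2 i, i < k &
        ((src e = rr i /\ tgt e = hh i) \/ (src e = hh i /\ tgt e = rr i.+1)))
  & (forall i, i < k -> #|[set e | (src e == rr i) && (tgt e == hh i)]| = 2 /\
         #|[set e | (src e == hh i) && (tgt e == rr i.+1)]| = 1)]].

Lemma main_ind u : dom u -> reach u m -> (u != m -> outdeg src u = 2) ->
  exists k rr hh, chainP u k rr hh.
Proof.
move: u; apply: down_ind => u IH Hdu Hum Hout.
case: (eqVneq u m) => [Eum|Hne].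
  exists 0, (fun _ => m), (fun _ => m); split=> //; split.
  - move=> v; split=> [[Hr Ha]|[]//]; rewrite Eum in Hr.
    by case: (acyc (reach_above Hr Ha)).
  - move=> e; split=> [[Hr Ha]|[]//]; rewrite Eum in Hr.
    by case: (acyc (reach_above Hr (above_edge Ha))).
  - by [].
have [h [u' [[Hh Hh' Hout1 Hdu' Hu'm] Hout']]] := step Hdu Hne Hum (Hout Hne).
have Hum' := above_neq Hum Hne.
have [e1 /eqP He1] : exists e, src e == u by apply: cardpos_set; move: (Hout Hne); rewrite /outdeg => ->.
have [g /eqP Hg] : exists e, src e == h by apply: cardpos_set; move: Hout1; rewrite /outdeg => ->.
have Huh : above u h by rewrite -He1 -(Hh e1 He1); apply: edge_above'.
have Hhu' : above h u' by rewrite -Hg -(Hh' g Hg); apply: edge_above'.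
have Huu' := above_trans Huh Hhu'.
have [k [rr [hh [R0 Rk Hu [HN HE HC]]]]] := IH u' Huu' Hdu' Hu'm Hout'.
have Hrr : forall i, i <= k -> reach u' (rr i).
  move=> i; rewrite leq_eqVlt => /orP [/eqP ->|Hi]; first by rewrite Rk.
  by have [] := (HN (rr i)).2 (ex_intro2 _ _ i Hi (or_introl erefl)).
have Hhh : forall i, i < k -> reach u' (hh i).
  by move=> i Hi; have [] := (HN (hh i)).2 (ex_intro2 _ _ i Hi (or_intror erefl)).
exists k.+1, (fun i => if i is j.+1 then rr j else u), (fun i => if i is j.+1 then hh j else h).
split=> //.
- set R := [seq rr i | i <- iota 0 k.+1] in Hu *; set H := [seq hh i | i <- iota 0 k] in Hu *.
  have -> : [seq (fun i => if i is j.+1 then rr j else u) i | i <- iota 0 k.+2] = u :: R.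
    by rewrite /= map_iotaS.
  have -> : [seq (fun i => if i is j.+1 then hh j else h) i | i <- iota 0 k.+1] = h :: H.
    by rewrite /= map_iotaS.
  have HL : forall z, z \in R ++ H -> reach u' z.
    move=> z; rewrite mem_cat => /orP [/mapP [i Hi ->]|/mapP [i Hi ->]]; move: Hi; rewrite mem_iota /=.
      by move=> Hi; apply: Hrr.
    by move=> Hi; apply: Hhh.
  have Hp : perm_eq (R ++ [:: h] ++ H) ([:: h] ++ R ++ H) by rewrite perm_catCA.
  rewrite cat_cons; change (uniq (u :: R ++ [:: h] ++ H)); rewrite cons_uniq (perm_uniq Hp) (perm_mem Hp) !cat1s cons_uniq Hu andbT.
  rewrite in_cons negb_or -andbA; apply/and3P; split.
  + by apply/eqP => Euh; move: Huh; rewrite Euh => /acyc.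
  + by apply/negP => /HL Hr; case: (acyc (reach_above Hr Huu')).
  + by apply/negP => /HL Hr; case: (acyc (reach_above Hr Hhu')).
split.
- move=> v; split.
  + move=> [[<-|Hv] Hvm].
      by exists 0 => //; left.
    have [e He Hr] := above_first Hv; rewrite (Hh e He) in Hr.
    case: Hr => [<-|Hv']; first by exists 0 => //; right.
    have [e' He' Hr'] := above_first Hv'; rewrite (Hh' e' He') in Hr'.
    by have [i Hi Hvi] := (HN v).1 (conj Hr' Hvm); exists i.+1.
  + move=> [[|i] Hi [->|->]].
    * by split=> //; left.
    * by split; [right | apply: above_reach Hhu' Hu'm].
    * have [Hr Ha] := (HN (rr i)).2 (ex_intro2 _ _ i Hi (or_introl erefl)).
      by split=> //; apply: reach_trans (or_intror Huu') Hr.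
    * have [Hr Ha] := (HN (hh i)).2 (ex_intro2 _ _ i Hi (or_intror erefl)).
      by split=> //; apply: reach_trans (or_intror Huu') Hr.
- move=> e; split.
  + move=> [[Es|Hs] Ht].
      by exists 0 => //; left; split=> //; apply: Hh.
    have [e0 He0 Hr] := above_first Hs; rewrite (Hh e0 He0) in Hr.
    case: Hr => [Es|Hs'].
      by exists 0 => //; right; split=> //=; rewrite R0; apply: Hh'.
    have [e1' He1' Hr] := above_first Hs'; rewrite (Hh' e1' He1') in Hr.
    by have [i Hi Hei] := (HE e).1 (conj Hr Ht); exists i.+1.
  + move=> [[|i] Hi [[Es Et]|[Es Et]]].
    * by split; [left | rewrite Et; right; apply: above_reach Hhu' Hu'm].
    * by split; [right; rewrite Es | move: Et => /= ->; rewrite R0].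
    * have [Hr Ht] := (HE e).2 (ex_intro2 _ _ i Hi (or_introl (conj Es Et))).
      by split=> //; apply: reach_trans (or_intror Huu') Hr.
    * have [Hr Ht] := (HE e).2 (ex_intro2 _ _ i Hi (or_intror (conj Es Et))).
      by split=> //; apply: reach_trans (or_intror Huu') Hr.
- move=> [|i] Hi; last exact: HC i Hi.
  split.
    have := Hout Hne; rewrite /outdeg => <-; apply: eq_card => e; rewrite !inE.
    by case: eqP => //= Es; rewrite (Hh e Es) eqxx.
  rewrite /= R0; move: Hout1; rewrite /outdeg => <-; apply: eq_card => e; rewrite !inE.
  by case: eqP => //= Es; rewrite (Hh' e Es) eqxx.
Qed.
End Net.

Theorem mainTheorem6 (X V E : finType) (src tgt : E -> V) (r : V)
    (lab : X -> V) (m : V) :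
  rooted_network src tgt r lab ->
  level1 src tgt ->
  is_MRCA src tgt r lab m ->
  exists (k : nat) (rr hh : nat -> V),
    [/\ rr 0 = r, rr k = m,
        uniq ([seq rr i | i <- iota 0 k.+1] ++ [seq hh i | i <- iota 0 k])
      & [/\         (forall v, above src tgt v m <-> exists2 i, i < k & (v = rr i \/ v = hh i)),
        (forall e, edge_above src tgt e m <->
             exists2 i, i < k &
               ((src e = rr i /\ tgt e = hh i) \/ (src e = hh i /\ tgt e = rr i.+1)))
      & (forall i, i < k ->
           #|[set e | (src e == rr i) && (tgt e == hh i)]| = 2 /\
           #|[set e | (src e == hh i) && (tgt e == rr i.+1)]| = 1)]].
Proof.
move=> [_ Hacyc _ _ [Hroot Hnodes [_ Hleaf]]] Hlvl HM.
have Hrr : forall v, reach src tgt r v.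
  move=> v; have [p Hp] := root_reach Hacyc Hnodes v; exact: walk_reach Hp.
have Hdr : on_all_root_leaf_paths src tgt r lab r by move=> x p _; rewrite mem_head.
have Hout : r != m -> outdeg src r = 2 by move=> _; exact: (proj2 Hroot).
have [k [rr [hh [R0 Rk Hu [HN HE HC]]]]] := main_ind Hacyc Hroot Hnodes Hleaf Hlvl HM Hdr (Hrr m) Hout.
exists k, rr, hh; split=> //; split=> //.
- move=> v; rewrite -HN; split=> [H|[]//]; split=> //.
- move=> e; rewrite -HE; split=> [H|[]//]; split=> //.
Qed.
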